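(* Let $L$ be a Moufang loop such that $x^2\in Z(L)$ for all $x\in L$. Then for all $x,y,z\in L$: (i) $[R_x,R_y]=R_{[x,y]}$; (ii) $[R_y,L_z]=R_{y^{-1},z}=L_{y,z^{-1}}$; (iii) $[[R_x,L_y],R_z]=R_{(x,y,z)}$.
   Context: A Moufang loop is a loop satisfying $x(y(xz))=((xy)x)z$; it is diassociative, so powers, inverses and commutators $[x,y]=x^{-1}y^{-1}xy$ are well defined. The associator is $(x,y,z)=(xy\cdot z)^{-1}(x\cdot yz)$. The center $Z(L)$ consists of all $z$ with $[x,z]=(x,y,z)=(x,z,y)=(z,x,y)=1$ for all $x,y\in L$. Maps act on the right: $yR_x=yx$, $yL_x=xy$, and compositions are read left to right. For permutations, $[A,B]=A^{-1}B^{-1}AB$. The inner maps are $R_{x,y}=R_xR_yR_{xy}^{-1}$ and $L_{x,y}=L_xL_yL_{yx}^{-1}$. *)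

(* Defs.v *)
(* A loop: carrier with multiplication, identity and left/right divisions,
   x \ y = ldiv x y  (unique solution z of x*z = y),
   y / x = rdiv y x  (unique solution z of z*x = y). *)
Record loop := Loop {
  carrier :> Type;
  mul : carrier -> carrier -> carrier;
  one : carrier;
  ldiv : carrier -> carrier -> carrier;
  rdiv : carrier -> carrier -> carrier;
  mul1x : forall x, mul one x = x;
  mulx1 : forall x, mul x one = x;
  ldiv_mul : forall x y, ldiv x (mul x y) = y;
  mul_ldiv : forall x y, mul x (ldiv x y) = y;
  rdiv_mul : forall x y, rdiv (mul y x) x = y;
  mul_rdiv : forall x y, mul (rdiv y x) x = y
}.

Arguments mul {l} _ _.
Arguments one {l}.
Arguments ldiv {l} _ _.
Arguments rdiv {l} _ _.

Section LoopDefs.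
Variable L : loop.
Implicit Types x y z w : L.

Definition moufang : Prop :=
  forall x y z : L, mul x (mul y (mul x z)) = mul (mul (mul x y) x) z.

(* inverse: x^{-1} := x \ 1 (two-sided in a Moufang loop) *)
Definition linv x : L := ldiv x one.

(* commutator [x,y] = x^{-1} y^{-1} x y  (well defined by diassociativity) *)
Definition comm x y : L := mul (mul (mul (linv x) (linv y)) x) y.

Definition assoc x y z : L :=
  mul (linv (mul (mul x y) z)) (mul x (mul y z)).

Definition in_center z : Prop :=
  forall x y : L, comm x z = one /\ assoc x y z = one /\
                  assoc x z y = one /\ assoc z x y = one.

(* Maps act on the right; a permutation is represented by its action on
   points, compositions read left to right. *)
Definition R x : L -> L := fun w => mul w x.
Definition Rinv x : L -> L := fun w => rdiv w x.
Definition Lm x : L -> L := fun w => mul x w.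
Definition Linv x : L -> L := fun w => ldiv x w.

Definition seqc (A B : L -> L) : L -> L := fun w => B (A w).

(* permutation commutator [A,B] = A^{-1} B^{-1} A B, given A, B and their
   inverses *)
Definition pcomm (A Ai B Bi : L -> L) : L -> L :=
  seqc (seqc (seqc Ai Bi) A) B.

Definition Rxy x y : L -> L := seqc (seqc (R x) (R y)) (Rinv (mul x y)).
Definition Lxy x y : L -> L := seqc (seqc (Lm x) (Lm y)) (Linv (mul y x)).

End LoopDefs.

(* Main.v *)
Require Import Defs.
From Stdlib Require Import Setoid.

Section S.
Variable L : loop.
Hypothesis HM : moufang L.
Hypothesis HS : forall x : L, in_center L (mul x x).

Local Infix "*" := mul.
Local Notation i := (linv L).
Local Notation "1" := (@one L).

Lemma canl (x y z : L) : x*y = x*z -> y = z.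
Proof. intro H. rewrite <- (ldiv_mul L x y), H. apply ldiv_mul. Qed.
Lemma canr (x y z : L) : y*x = z*x -> y = z.
Proof. intro H. rewrite <- (rdiv_mul L x y), H. apply rdiv_mul. Qed.

Lemma flex (x y : L) : x*(y*x) = (x*y)*x.
Proof. pose proof (HM x y 1) as H. rewrite !mulx1 in H. exact H. Qed.
Lemma LA (x z : L) : x*(x*z) = (x*x)*z.
Proof. pose proof (HM x 1 z) as H. rewrite mul1x, mulx1 in H. exact H. Qed.
Lemma mulxi (x : L) : x * i x = 1.
Proof. apply mul_ldiv. Qed.
Lemma LIP (x z : L) : i x * (x*z) = z.
Proof. apply (canl x). pose proof (HM x (i x) z) as H. rewrite H, mulxi, mul1x. reflexivity. Qed.
Lemma mulix (x : L) : i x * x = 1.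
Proof. pose proof (LIP x 1) as H. rewrite mulx1 in H. exact H. Qed.
Lemma ii (x : L) : i (i x) = x.
Proof. unfold linv at 1. rewrite <- (mulix x). apply ldiv_mul. Qed.
Lemma LIP' (x z : L) : x * (i x * z) = z.
Proof. pose proof (LIP (i x) z) as H. rewrite ii in H. exact H. Qed.
Lemma RIP (u x : L) : (u*x)*i x = u.
Proof. pose proof (HM x (ldiv x u) (i x)) as H. rewrite mulxi, mulx1, mul_ldiv in H.
  symmetry; exact H. Qed.
Lemma RIP' (u x : L) : (u*i x)*x = u.
Proof. pose proof (RIP u (i x)) as H. rewrite ii in H. exact H. Qed.
Lemma rdivE (w x : L) : rdiv w x = w * i x.
Proof. rewrite <- (RIP' w x) at 1. apply rdiv_mul. Qed.
Lemma ldivE (x w : L) : ldiv x w = i x * w.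
Proof. rewrite <- (LIP' x w) at 1. apply ldiv_mul. Qed.
Lemma inv_unique (x y : L) : x*y = 1 -> y = i x.
Proof. intro H. rewrite <- (LIP x y), H, mulx1. reflexivity. Qed.
Lemma AAIP (x y : L) : i (x*y) = i y * i x.
Proof. assert (H : i (x*y) * x = i y).
  { rewrite <- (RIP x y) at 2. apply LIP. }
  rewrite <- H. symmetry. apply RIP. Qed.
Lemma RM (z x y : L) : ((z*x)*y)*x = z*(x*(y*x)).
Proof. pose proof (f_equal i (HM (i x) (i y) (i z))) as H.
  rewrite !AAIP, !ii in H. exact H. Qed.
Lemma RA (z x : L) : (z*x)*x = z*(x*x).
Proof. pose proof (RM z x 1) as H. rewrite mulx1, mul1x in H. exact H. Qed.
Lemma N (x y z : L) : x*(y*z) = ((x*y)*x)*(i x*z).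
Proof. rewrite <- (HM x y (i x * z)), LIP'. reflexivity. Qed.

Definition Cen (c : L) := forall a b : L, c*a = a*c /\ (c*a)*b = c*(a*b) /\
   (a*c)*b = a*(c*b) /\ (a*b)*c = a*(b*c).

Section CenL.
Variable c : L.
Hypothesis Hc : Cen c.
Lemma pcm a : c*a = a*c. Proof. apply (Hc a 1). Qed.
Lemma pm1 a b : (c*a)*b = c*(a*b). Proof. apply (Hc a b). Qed.
Lemma pm2 a b : (a*c)*b = a*(c*b). Proof. apply (Hc a b). Qed.
Lemma pm3 a b : (a*b)*c = a*(b*c). Proof. apply (Hc a b). Qed.
Lemma pr1 a b : a*(b*c) = (a*b)*c. Proof. symmetry; apply pm3. Qed.
Lemma pr2 a b : (a*c)*b = (a*b)*c. Proof. rewrite pm2, pcm, pm3. reflexivity. Qed.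
End CenL.
Arguments pcm {c} Hc a.
Arguments pm1 {c} Hc a b.
Arguments pm2 {c} Hc a b.
Arguments pm3 {c} Hc a b.
Arguments pr1 {c} Hc a b.
Arguments pr2 {c} Hc a b.

Lemma assoc_one (x y z : L) : assoc L x y z = 1 -> (x*y)*z = x*(y*z).
Proof. unfold assoc. intro H. apply inv_unique in H. rewrite H, ii. reflexivity. Qed.

Lemma in_center_Cen c : in_center L c -> Cen c.
Proof. intros H a b.
  destruct (H a b) as [Hc [H1 [H2 H3]]].
  apply assoc_one in H1. apply assoc_one in H2. apply assoc_one in H3.
  repeat split; auto.
  destruct (H (i a * i c) a) as [_ [H4 _]]. apply assoc_one in H4.
  unfold comm in Hc. rewrite H4 in Hc. apply inv_unique in Hc.
  rewrite Hc, AAIP, !ii. reflexivity.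
Qed.

Lemma Cen_one : Cen 1.
Proof. intros a b. rewrite !mul1x, !mulx1. repeat split; reflexivity. Qed.

Lemma Cen_mul c d : Cen c -> Cen d -> Cen (c*d).
Proof. intros Hc Hd a b. split; [|split; [|split]].
  - rewrite (pm1 Hc), (pcm Hd), <- (pm1 Hc), (pcm Hc), (pm2 Hc). reflexivity.
  - rewrite (pm1 Hc), (pm1 Hc), (pm1 Hd), <- (pm1 Hc). reflexivity.
  - rewrite <- (pm3 Hd a c), (pm2 Hd), (pm2 Hc), (pm1 Hc). reflexivity.
  - rewrite <- (pm3 Hd (a*b) c), (pm3 Hc a b), (pm3 Hd a (b*c)), (pm3 Hd b c). reflexivity.
Qed.

Lemma Cen_inv c : Cen c -> Cen (i c).
Proof. intros Hc a b. split; [|split; [|split]].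
  - apply (canl c). rewrite LIP', <- (pm1 Hc a (i c)), (pcm Hc a), (pm2 Hc a (i c)), mulxi, mulx1. reflexivity.
  - apply (canl c). rewrite <- (pm1 Hc (i c * a) b), !LIP'. reflexivity.
  - apply (canl c). rewrite <- (pm1 Hc (a * i c) b), <- (pm1 Hc a (i c)), (pcm Hc a),
      (pm2 Hc a (i c)), mulxi, mulx1.
    rewrite <- (pm1 Hc a (i c * b)), (pcm Hc a), (pm2 Hc a (i c * b)), LIP'. reflexivity.
  - apply (canl c). rewrite <- (pm1 Hc (a*b) (i c)), (pcm Hc (a*b)), RIP.
    rewrite <- (pm1 Hc a (b * i c)), (pcm Hc a), (pm2 Hc a (b * i c)), <- (pm1 Hc b (i c)),
      (pcm Hc b), RIP. reflexivity.
Qed.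

Definition s (x : L) := x*x.
Definition t (x : L) := i (x*x).
Lemma Cen_s x : Cen (x*x). Proof. apply in_center_Cen, HS. Qed.
Lemma Cen_t x : Cen (t x). Proof. apply Cen_inv, Cen_s. Qed.
Lemma inv_sq x : i x = x * t x.
Proof. symmetry; apply inv_unique. rewrite (pr1 (Cen_t x)). apply mulxi. Qed.
Lemma st x : (x*x) * t x = 1. Proof. apply mulxi. Qed.
Lemma ts x : t x * (x*x) = 1. Proof. apply mulix. Qed.

Definition e (x y : L) := ldiv (x*y) (y*x).
Lemma E1 x y : y*x = (x*y)*e x y.
Proof. symmetry; apply mul_ldiv. Qed.

Lemma e_formula x y : e x y = (t (x*y) * (x*x)) * (y*y).
Proof. unfold e.
  assert (H : (x*y) * ((t (x*y) * (x*x)) * (y*y)) = y*x).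
  { rewrite (pr1 (Cen_s y) (x*y)), (pr1 (Cen_s x) (x*y)), <- (inv_sq (x*y)), AAIP,
      (inv_sq x), (inv_sq y), (pr1 (Cen_t x) (y * t y) x), (pr2 (Cen_t y) y x).
    rewrite (pm3 (Cen_s x) ((y*x)*t y) (t x)), ts, mulx1, (pm3 (Cen_s y) (y*x) (t y)), ts, mulx1.
    reflexivity. }
  rewrite <- H. apply ldiv_mul.
Qed.

Lemma Cen_e x y : Cen (e x y).
Proof. rewrite e_formula. apply Cen_mul; [apply Cen_mul|]; [apply Cen_t | apply Cen_s | apply Cen_s]. Qed.

Lemma xyx x y : (x*y)*x = (y*(x*x))*e x y.
Proof. rewrite <- flex, (E1 x y), (pr1 (Cen_e x y) x (x*y)), (LA x y), (pcm (Cen_s x) y). reflexivity. Qed.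

Lemma K1 x y z : x*(y*z) = (y*(x*z))*e x y.
Proof. pose proof (HM x y (x*z)) as H.
  rewrite (LA x z), (pcm (Cen_s x) z), (pr1 (Cen_s x) y z), (pr1 (Cen_s x) x (y*z)) in H.
  rewrite (xyx x y), (pr2 (Cen_e x y) (y*(x*x)) (x*z)), (pr2 (Cen_s x) y (x*z)) in H.
  rewrite (pr2 (Cen_s x) (y*(x*z)) (e x y)) in H.
  apply canr in H. exact H.
Qed.

Lemma e_sq x y : e x y * e x y = 1.
Proof. pose proof (K1 x y 1) as H. rewrite !mulx1, (E1 x y), (pm3 (Cen_e x y)) in H.
  apply (canl (x*y)). rewrite mulx1. symmetry; exact H. Qed.

Lemma e_sym x y : e y x = e x y.
Proof. apply (canl (y*x)). rewrite <- (E1 y x).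
  pose proof (K1 x y 1) as H. rewrite !mulx1 in H. exact H. Qed.

Lemma e_c x y c : Cen c -> e x (y*c) = e x y.
Proof. intro Hc. apply (canl (x*(y*c))). rewrite <- (E1 x (y*c)).
  rewrite (pr2 Hc y x), (E1 x y), (pr1 Hc x y), (pr2 Hc (x*y) (e x y)). reflexivity. Qed.

Lemma e_c1 x y c : Cen c -> e (x*c) y = e x y.
Proof. intro Hc. rewrite e_sym, (e_c _ _ _ Hc), e_sym. reflexivity. Qed.

Lemma K2 z x y : (z*y)*x = ((z*x)*y)*e x y.
Proof. pose proof (RM (z*x) x y) as H.
  rewrite (RA z x), (pr2 (Cen_s x) z y), (pr2 (Cen_s x) (z*y) x) in H.
  rewrite (flex x y), (xyx x y), (pr1 (Cen_e x y) (z*x)), (pr1 (Cen_s x) (z*x) y) in H.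
  rewrite (pr2 (Cen_s x) ((z*x)*y) (e x y)) in H.
  apply canr in H. exact H.
Qed.

Definition O2 (c : L) := Cen c /\ c*c = 1.
Lemma O2_mul c d : O2 c -> O2 d -> O2 (c*d).
Proof. intros [Hc Hc2] [Hd Hd2]. split. apply Cen_mul; auto.
  rewrite (pm1 Hc d (c*d)), <- (pm1 Hd c d), (pcm Hd c), (pm3 Hd c d), Hd2, mulx1, Hc2. reflexivity. Qed.
Lemma O2_e x y : O2 (e x y). Proof. split. apply Cen_e. apply e_sq. Qed.

Lemma AC3 c d f : Cen f -> (c*d)*f = (f*c)*d.
Proof. intro Hf. rewrite <- (pcm Hf (c*d)), (pm1 Hf c d). reflexivity. Qed.
Lemma AC4 c d f : Cen d -> Cen f -> (c*d)*f = (c*f)*d.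
Proof. intros Hd Hf. rewrite (pm3 Hf c d), (pcm Hd f), (pm3 Hd c f). reflexivity. Qed.

Definition a (x y z : L) := ldiv (x*(y*z)) ((x*y)*z).
Lemma A1 x y z : (x*y)*z = (x*(y*z))*a x y z.
Proof. symmetry; apply mul_ldiv. Qed.

Lemma F1 x y z : a x y z = (e z (x*y) * e z x) * e y z.
Proof. unfold a.
  assert (H : (x*(y*z))*((e z (x*y) * e z x) * e y z) = (x*y)*z).
  { rewrite (E1 z (x*y)), (K1 z x y), (E1 y z), (pr1 (Cen_e y z) x (y*z)).
    rewrite (pr1 (Cen_e y z) (x*(y*z)) (e z (x*y) * e z x)), (pr1 (Cen_e z x) (x*(y*z)) (e z (x*y))).
    rewrite (pr2 (Cen_e z (x*y)) (x*(y*z)) (e z x)), (pr2 (Cen_e z (x*y)) ((x*(y*z))*e z x) (e y z)),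
      (pr2 (Cen_e z x) (x*(y*z)) (e y z)).
    reflexivity. }
  rewrite <- H. apply ldiv_mul.
Qed.

Lemma O2_a x y z : O2 (a x y z).
Proof. rewrite F1. apply O2_mul; [apply O2_mul|]; apply O2_e. Qed.
Lemma Cen_a x y z : Cen (a x y z). Proof. apply O2_a. Qed.
Lemma a_sq x y z : a x y z * a x y z = 1. Proof. apply O2_a. Qed.

Lemma F2 x y z : a x y z = (e x y * e x z) * e (y*z) x.
Proof.
  assert (HK : x*(y*z) = ((x*y)*z)*((e x y * e x z) * e (y*z) x)).
  { rewrite (E1 (y*z) x), (K2 y x z), (E1 x y), (pr2 (Cen_e x y) (x*y) z).
    rewrite (pm3 (Cen_e x z) ((x*y)*z) (e x y)), (pm3 (Cen_e (y*z) x)). reflexivity. }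
  pose proof (A1 x y z) as HA. rewrite HK in HA.
  rewrite (pm3 (Cen_a x y z)) in HA.
  assert (H1 : ((e x y * e x z) * e (y*z) x) * a x y z = 1).
  { apply (canl ((x*y)*z)). rewrite mulx1. symmetry; exact HA. }
  apply inv_unique in H1. rewrite H1. symmetry. apply inv_unique.
  apply O2_mul; [apply O2_mul|]; apply O2_e.
Qed.

Lemma a_cyc x y z : a x y z = a y z x.
Proof. rewrite F2, F1, (e_sym x (y*z)), (e_sym x z). apply AC3. apply Cen_e. Qed.

Lemma a_swap x y z : a x y z = a y x z.
Proof. rewrite !F1, (E1 x y), (e_c _ _ _ (Cen_e x y)), (e_sym y z), (e_sym x z).
  apply AC4; apply Cen_e. Qed.

Lemma a_swap23 x y z : a x y z = a x z y.
Proof. rewrite (a_cyc x z y), (a_swap z y x). apply a_cyc. Qed.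

Lemma a_c3 x y c : Cen c -> a x y c = 1.
Proof. intro Hc. pose proof (A1 x y c) as H. rewrite (pm3 Hc) in H.
  apply (canl (x*(y*c))). rewrite mulx1. symmetry; exact H. Qed.
Lemma a_LA x y : a x x y = 1.
Proof. pose proof (A1 x x y) as H. rewrite <- (LA x y) in H.
  apply (canl (x*(x*y))). rewrite mulx1. symmetry; exact H. Qed.
Lemma a_RA y x : a y x x = 1.
Proof. pose proof (A1 y x x) as H. rewrite (RA y x) in H.
  apply (canl (y*(x*x))). rewrite mulx1. symmetry; exact H. Qed.

Lemma A1' x y z : x*(y*z) = ((x*y)*z)*a x y z.
Proof. rewrite (A1 x y z), (pm3 (Cen_a x y z)), a_sq, mulx1. reflexivity. Qed.

Lemma lin_abstract (al be G : L -> L) :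
  (forall m, Cen (al m)) -> (forall m, Cen (be m)) -> be 1 * be 1 = 1 -> al 1 = 1 ->
  (forall y z, (y*z)*al (y*z) = G y * (z * be z)) ->
  forall y z, al (y*z) = al y * al z.
Proof. intros Ha Hb Hb1 Ha1 H y z.
  assert (HG : forall y, G y = (y * al y) * be 1).
  { intro y0. pose proof (H y0 1) as H0. rewrite mulx1, mul1x in H0. rewrite H0.
    rewrite (pm3 (Hb 1)), Hb1, mulx1. reflexivity. }
  assert (Hz : al z = be z * be 1).
  { pose proof (H 1 z) as H0. rewrite mul1x, HG, mul1x, Ha1, mul1x in H0.
    rewrite (pcm (Hb 1)), (pm3 (Hb 1)) in H0. apply canl in H0. exact H0. }
  pose proof (H y z) as H0. rewrite HG in H0.
  rewrite (pr1 (Hb z)), (pr2 (Hb 1)), (pr2 (Ha y)), (pm3 (Hb z)) in H0.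
  rewrite (pcm (Hb 1)), <- Hz, (pm3 (Ha z)) in H0.
  apply canl in H0. exact H0.
Qed.

Lemma lin3 k x y z : a k x (y*z) = a k x y * a k x z.
Proof.
  assert (D : forall m, i (k*x) * (k*(x*m)) = m * a k x m).
  { intro m. rewrite (A1' k x m), (pr1 (Cen_a k x m) (i (k*x))), LIP. reflexivity. }
  assert (B : forall z, i (i (k*x)) * (i k * (i x * z)) = z * (e x k * a (i k) (i x) z)).
  { intro z0. rewrite ii, (A1' (i k) (i x) z0), <- AAIP, (E1 x k).
    rewrite (pr1 (Cen_a (i k) (i x) z0) ((x*k)*e x k)), (pr2 (Cen_e x k) (x*k)), LIP'.
    rewrite (pr1 (Cen_a (i k) (i x) z0) z0 (e x k)). reflexivity. }
  apply (lin_abstract (a k x) (fun z => e x k * a (i k) (i x) z)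
     (fun y => (i (k*x) * ((k*((x*y)*x))*k)) * i (k*x))).
  - intro; apply Cen_a.
  - intro; apply Cen_mul; [apply Cen_e | apply Cen_a].
  - apply O2_mul; [apply O2_e | apply O2_a].
  - apply a_c3, Cen_one.
  - intros y0 z0. rewrite <- D, <- B, (N x y0 z0), (N k ((x*y0)*x) (i x * z0)), (N (i (k*x)) _ _).
    reflexivity.
Qed.

Lemma lin2 x u v z : a x (u*v) z = a x u z * a x v z.
Proof. rewrite (a_swap23 x (u*v) z), lin3, <- (a_swap23 x u z), <- (a_swap23 x v z). reflexivity. Qed.
Lemma lin1 u v y z : a (u*v) y z = a u y z * a v y z.
Proof. rewrite (a_swap (u*v) y z), lin2, <- (a_swap u y z), <- (a_swap v y z). reflexivity. Qed.
Lemma a_c2 x m c z : Cen c -> a x (m*c) z = a x m z.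
Proof. intro Hc. rewrite lin2, (a_swap23 x c z), (a_c3 _ _ _ Hc), mulx1. reflexivity. Qed.
Lemma a_c1 m c y z : Cen c -> a (m*c) y z = a m y z.
Proof. intro Hc. rewrite lin1, (a_swap c y z), (a_swap23 y c z), (a_c3 _ _ _ Hc), mulx1. reflexivity. Qed.
Lemma a_inv2 x y z : a x (i y) z = a x y z.
Proof. rewrite (inv_sq y). apply a_c2, Cen_t. Qed.
Lemma a_inv1 x y z : a (i x) y z = a x y z.
Proof. rewrite (inv_sq x). apply a_c1, Cen_t. Qed.
Lemma inv_a x y z : i (a x y z) = a x y z.
Proof. symmetry. apply inv_unique. apply a_sq. Qed.
Lemma rdiv_c m c z : Cen c -> rdiv (m*c) z = (rdiv m z)*c.
Proof. intro Hc. rewrite !rdivE, (pr2 Hc). reflexivity. Qed.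

Lemma comm_e x y : comm L x y = e x y.
Proof. unfold comm. rewrite (inv_sq x), (inv_sq y).
  rewrite (pr1 (Cen_t y) (x*t x) y), (pr2 (Cen_t x) x y).
  rewrite (pr2 (Cen_t y) ((x*y)*t x) x), (pr2 (Cen_t x) (x*y) x).
  rewrite (pr2 (Cen_t y) (((x*y)*x)*t x) y), (pr2 (Cen_t x) ((x*y)*x) y).
  rewrite (xyx x y), (pr2 (Cen_e x y) (y*(x*x)) y), (pr2 (Cen_s x) y y).
  rewrite (pr2 (Cen_e x y) ((y*y)*(x*x)) (t x)), (pm3 (Cen_t x) (y*y) (x*x)), st, mulx1.
  rewrite (pr2 (Cen_e x y) (y*y) (t y)), st, mul1x. reflexivity.
Qed.

Lemma assoc_a x y z : assoc L x y z = a x y z.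
Proof. unfold assoc. rewrite (A1 x y z), AAIP, inv_a, (pm1 (Cen_a x y z)), mulix, mulx1.
  reflexivity. Qed.

Lemma claim1 x y w : ((rdiv (rdiv w x) y * x) * y) = w * comm L x y.
Proof. rewrite (K2 (rdiv (rdiv w x) y) y x), !mul_rdiv, comm_e, e_sym. reflexivity. Qed.

Lemma H_R y z w : rdiv ((w*i y)*z) (i y*z) = w * a w y z.
Proof. rewrite (A1 w (i y) z), rdivE, (pr2 (Cen_a w (i y) z) (w*(i y * z))), RIP, a_inv2.
  reflexivity. Qed.
Lemma H_L y z w : ldiv (i z*y) (i z*(y*w)) = w * a z y w.
Proof. rewrite (A1' (i z) y w), ldivE, (pr1 (Cen_a (i z) y w) (i (i z*y))), LIP, a_inv1.
  reflexivity. Qed.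

Lemma claim2a y z w : z*((ldiv z (rdiv w y))*y) = rdiv ((w*i y)*z) (i y*z).
Proof. rewrite H_R, (A1' z (ldiv z (rdiv w y)) y), mul_ldiv, mul_rdiv, ldivE, rdivE.
  rewrite !lin2, !a_inv2, a_LA, a_RA, mul1x, mulx1, (a_cyc z w y). reflexivity. Qed.

Lemma claim2b y z w : rdiv ((w*i y)*z) (i y*z) = ldiv (i z*y) (i z*(y*w)).
Proof. rewrite H_R, H_L, (a_cyc z y w), (a_cyc y w z), <- (a_swap23 w y z). reflexivity. Qed.

Lemma P_eq x y m : y*((ldiv y (rdiv m x))*x) = m * a y m x.
Proof. rewrite (A1' y (ldiv y (rdiv m x)) x), mul_ldiv, mul_rdiv, ldivE, rdivE, !lin2, !a_inv2,
  a_LA, a_RA, mul1x, mulx1. reflexivity. Qed.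
Lemma Pinv_eq x y m : (y*(rdiv (ldiv y m) x))*x = m * a y m x.
Proof. rewrite (A1 y (rdiv (ldiv y m) x) x), mul_rdiv, mul_ldiv, rdivE, ldivE, !lin2, !a_inv2,
  a_LA, a_RA, mul1x, mulx1. reflexivity. Qed.

Lemma claim3 x y z w :
  (y*((ldiv y (rdiv (rdiv ((y*(rdiv (ldiv y w) x))*x) z) x))*x))*z = w * assoc L x y z.
Proof. rewrite Pinv_eq, (rdiv_c _ _ _ (Cen_a y w x)), P_eq, (a_c2 _ _ _ _ (Cen_a y w x)).
  rewrite (pr2 (Cen_a y (rdiv w z) x)), (pr2 (Cen_a y w x)), mul_rdiv.
  rewrite rdivE, lin2, a_inv2, (pm3 (Cen_mul _ _ (Cen_a y w x) (Cen_a y z x))).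
  rewrite <- (pm1 (Cen_a y w x)), a_sq, mul1x, assoc_a, (a_cyc x y z). reflexivity.
Qed.

End S.

Theorem mainTheorem8 (L : loop) :
  moufang L ->
  (forall x : L, in_center L (mul x x)) ->
  forall x y z : L,
    (forall w : L,
        pcomm L (R L x) (Rinv L x) (R L y) (Rinv L y) w = R L (comm L x y) w) /\
    (forall w : L,
        pcomm L (R L y) (Rinv L y) (Lm L z) (Linv L z) w = Rxy L (linv L y) z w /\
        Rxy L (linv L y) z w = Lxy L y (linv L z) w) /\
    (forall w : L,
        pcomm L (pcomm L (R L x) (Rinv L x) (Lm L y) (Linv L y))
                (pcomm L (Lm L y) (Linv L y) (R L x) (Rinv L x))
                (R L z) (Rinv L z) w
        = R L (assoc L x y z) w).
Proof.
  intros HM HS x y z.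
  unfold pcomm, seqc, R, Rinv, Lm, Linv, Rxy, Lxy; cbv beta.
  split; [|split].
  - intro w. apply claim1; assumption.
  - intro w. split.
    + apply claim2a; assumption.
    + apply claim2b; assumption.
  - intro w. apply claim3; assumption.
Qed.
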